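(* Let $q=4$, $e=6$, and $n=65921=1+2q^3+q^4+q^8$. Then $$g_{n,q}\equiv S_3^2+S_4^{q^2+1}\pmod{x^{q^e}-x},$$ and $g_{n,q}$ is a permutation polynomial of $\mathbb{F}_{q^e}=\mathbb{F}_{4^6}$.
   Context: For a prime power $q$ with characteristic $p$ and integer $n\ge0$, $g_{n,q}\in\mathbb{F}_p[x]$ is the unique polynomial satisfying $\sum_{a\in\mathbb{F}_q}(x+a)^n=g_{n,q}(x^q-x)$. For a positive integer $m$, $S_m=x+x^q+\cdots+x^{q^{m-1}}\in\mathbb{F}_p[x]$; exponents on $S_m$ denote powers of polynomials. A polynomial $f$ is a permutation polynomial of $\mathbb{F}_Q$ if $c\mapsto f(c)$ is a bijection of $\mathbb{F}_Q$. *)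

(* Defs.v *)
From HB Require Import structures.
From mathcomp Require Import all_boot all_order all_algebra all_field.
Set Implicit Arguments. Unset Strict Implicit. Unset Printing Implicit Defensive.
Import GRing.Theory.
Local Open Scope ring_scope.

Notation F2 := 'F_2.

(* Canonical embedding of F_2 = {0,1} into a ring R (a ring morphism
   whenever R has characteristic 2). *)
Definition F2toR (R : nzRingType) (c : F2) : R := (nat_of_ord c)%:R.

Definition liftp (R : nzRingType) (g : {poly F2}) : {poly R} :=
  map_poly (@F2toR R) g.

Definition Ssum (q m : nat) : {poly F2} := \sum_(i < m) 'X^(q ^ i).

(* Defining property of g_{n,q} in F_p[x], where F = F_q (q = #|F|):
   sum_{a in F_q} (x + a)^n = g_{n,q}(x^q - x)  in F_q[x]. *)
Definition is_g (F : finFieldType) (n : nat) (g : {poly F2}) : Prop :=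
  \sum_(a : F) ('X + a%:P) ^+ n = (liftp F g) \Po ('X^#|F| - 'X).

Definition is_perm_poly (K : finFieldType) (f : {poly F2}) : Prop :=
  bijective (fun c : K => (liftp K f).[c]).

(* Main.v *)
Require Import Defs.
From HB Require Import structures.
From mathcomp Require Import all_boot all_order all_algebra all_field.
From mathcomp Require Import ring.
Import GRing.Theory.
Set Implicit Arguments.
Unset Strict Implicit.
Local Open Scope ring_scope.

Section Char2.
Variable R : comNzRingType.
Hypothesis H2 : 2 \in [pchar R].

Lemma two0 : 2%:R = 0 :> R. Proof. exact: pcharf0 H2. Qed.
Lemma eq2 (x y q : R) : x = y + 2%:R * q -> x = y.
Proof. by rewrite two0 mul0r addr0. Qed.
Lemma sqrD2 (x y : R) : (x + y) ^+ 2 = x ^+ 2 + y ^+ 2.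
Proof. by rewrite sqrrD mulrn_pchar // addr0. Qed.
Lemma frD4 (x y : R) : (x + y) ^+ 4 = x ^+ 4 + y ^+ 4.
Proof. by rewrite (_ : 4 = 2 * 2)%N // !exprM !sqrD2. Qed.
Lemma frD4n (x y : R) i : (x + y) ^+ (4 ^ i) = x ^+ (4 ^ i) + y ^+ (4 ^ i).
Proof.
elim: i => [|i IH]; first by rewrite expn0 !expr1.
by rewrite expnSr !exprM IH frD4.
Qed.

Definition Hf (y0 y1 y2 y3 y4 y5 : R) :=
  (y0 + y1 + y2) ^+ 2 + (y0 + y1 + y2 + y3) * (y2 + y3 + y4 + y5).
Lemma Hf4 y0 y1 y2 y3 y4 y5 :
  (Hf y0 y1 y2 y3 y4 y5) ^+ 4 = Hf (y0^+4) (y1^+4) (y2^+4) (y3^+4) (y4^+4) (y5^+4).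
Proof.
have e : forall a : R, (a ^+ 2) ^+ 4 = (a ^+ 4) ^+ 2 by move=> a; rewrite -!exprM.
by rewrite /Hf frD4 e (exprMn _ (_ + _ + _ + _)) !frD4.
Qed.

Lemma Hf_id1 (x0 x1 x2 x3 x4 x5 : R) :
  (x1 + x2 + x3 + x4) ^+ 2 = Hf x2 x3 x4 x5 x0 x1 + Hf x4 x5 x0 x1 x2 x3.
Proof. apply: (eq2 (q := - (0 + x2 * x4 + x3 * x4 + x4^+2 + x2 * x5 + x0 * x2 + x3 * x5 + x0 * x3 + 2%:R * x4 * x5 + 2%:R * x0 * x4 + x5^+2 + 2%:R * x0 * x5 + x1 * x5 + x0^+2 + x0 * x1))); rewrite /Hf; ring. Qed.
Lemma Hf_id3 (d0 d1 d2 d3 d4 d5 e0 e1 : R) :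
  Hf (d0 + e0) (d1 + e1) (d2 + e0) (d3 + e1) (d4 + e0) (d5 + e1)
  = Hf d0 d1 d2 d3 d4 d5 + e1 ^+ 2.
Proof. apply: (eq2 (q := (0 + 3%:R * d0 * e0 + 2%:R * d0 * e1 + 4%:R * e0^+2 + 3%:R * d1 * e0 + 6%:R * e0 * e1 + 4%:R * d2 * e0 + 2%:R * d1 * e1 + 2%:R * e1^+2 + 3%:R * d2 * e1 + 2%:R * d3 * e0 + d4 * e0 + d5 * e0 + 2%:R * d3 * e1 + d4 * e1 + d5 * e1))); rewrite /Hf; ring. Qed.
End Char2.
Arguments Hf {R}.


Section Lift.
Variable R : comNzRingType.
Hypothesis H2 : 2 \in [pchar R].

Lemma F2toR_nmod : nmod_morphism (@F2toR R).
Proof.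
split; first by rewrite /F2toR.
move=> [[|[|x]] Hx] [[|[|y]] Hy] //; rewrite /F2toR /= ?add0r ?addr0 //.
by rewrite addrr_pchar2.
Qed.
Lemma F2toR_mon : monoid_morphism (@F2toR R).
Proof.
split; first by rewrite /F2toR.
move=> [[|[|x]] Hx] [[|[|y]] Hy] //; rewrite /F2toR /= ?mul0r ?mulr0 ?mulr1 //.
Qed.
HB.instance Definition _ := GRing.isNmodMorphism.Build _ _ (@F2toR R) F2toR_nmod.
HB.instance Definition _ := GRing.isMonoidMorphism.Build _ _ (@F2toR R) F2toR_mon.

Lemma liftp_Ssum m : liftp R (Ssum 4 m) = \sum_(i < m) 'X^(4 ^ i).
Proof.
rewrite /Ssum /liftp rmorph_sum; apply: eq_bigr => i _; exact: map_polyXn.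
Qed.

Lemma liftpD (p q : {poly 'F_2}) : liftp R (p + q) = liftp R p + liftp R q.
Proof. by rewrite /liftp rmorphD. Qed.
Lemma liftpM (p q : {poly 'F_2}) : liftp R (p * q) = liftp R p * liftp R q.
Proof. by rewrite /liftp rmorphM. Qed.
Lemma liftpX (p : {poly 'F_2}) n : liftp R (p ^+ n) = liftp R p ^+ n.
Proof. by rewrite /liftp rmorphXn. Qed.

Definition g0 : {poly 'F_2} := Ssum 4 8 * Ssum 4 4 + Ssum 4 3 ^+ 2.

Lemma liftp_g0 : liftp R g0 =
  (\sum_(i < 8) 'X^(4 ^ i)) * (\sum_(i < 4) 'X^(4 ^ i)) + (\sum_(i < 3) 'X^(4 ^ i)) ^+ 2.
Proof. by rewrite /g0 liftpD liftpM liftpX !liftp_Ssum. Qed.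
End Lift.

Section PermK.
Variable K : finFieldType.
Hypothesis HK : #|K| = (4 ^ 6)%N.
Lemma H2K : 2 \in [pchar K].
Proof. by apply: (@card_finPcharP _ 2 12); rewrite ?HK. Qed.
Let H2 := H2K.

Definition hK (c : K) :=
  let x1 := c ^+ 4 in let x2 := x1 ^+ 4 in let x3 := x2 ^+ 4 in
  let x4 := x3 ^+ 4 in let x5 := x4 ^+ 4 in Hf c x1 x2 x3 x4 x5.

Lemma x6 (c : K) : c ^+ 4 ^+ 4 ^+ 4 ^+ 4 ^+ 4 ^+ 4 = c.
Proof. by rewrite -!exprM -[in RHS](expf_card c) HK. Qed.

Lemma fr_inj (a b : K) : a ^+ 4 = b ^+ 4 -> a = b.
Proof.
move=> e; have : (a + b) ^+ 4 == 0 by rewrite frD4 // e addrr_pchar2.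
rewrite expf_eq0 /= addr_eq0 => /eqP ->; by rewrite oppr_pchar2.
Qed.

Lemma hK_inj : injective hK.
Proof.

have key : forall c : K,
  (c ^+ 4 + c ^+ 4 ^+ 4 + c ^+ 4 ^+ 4 ^+ 4 + c ^+ 4 ^+ 4 ^+ 4 ^+ 4) ^+ 2
  = (hK c) ^+ 4 ^+ 4 + (hK c) ^+ 4 ^+ 4 ^+ 4 ^+ 4.
  move=> c; rewrite /hK /= !(Hf4 H2) !x6.
  exact: Hf_id1.
move=> c d E.
have [e ce] : exists e, c = d + e by exists (c + d); rewrite addrCA addrr_pchar2 // addr0.
have De : e ^+ 4 + e ^+ 4 ^+ 4 + e ^+ 4 ^+ 4 ^+ 4 + e ^+ 4 ^+ 4 ^+ 4 ^+ 4 = 0.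
  have := key c; rewrite E -key => /eqP; rewrite -subr_eq0 oppr_pchar2 //.
  rewrite -sqrD2 // expf_eq0 /= => /eqP <-; rewrite ce !frD4 //.
  apply: (eq2 H2 (q := - (d ^+ 4 + d ^+ 4 ^+ 4 + d ^+ 4 ^+ 4 ^+ 4 + d ^+ 4 ^+ 4 ^+ 4 ^+ 4))); ring.
have ee : e ^+ 4 ^+ 4 = e.
  pose F := e ^+ 4 + e ^+ 4 ^+ 4 ^+ 4.
  have F4 : F ^+ 4 = F.
    rewrite /F frD4 //; apply: (eq2 H2 (q := - (e ^+ 4 + e ^+ 4 ^+ 4 ^+ 4))).
    rewrite -[RHS]addr0 -De; ring.
  have F0 : F = 0.
    have : F + F ^+ 4 ^+ 4 + F ^+ 4 ^+ 4 ^+ 4 ^+ 4 = 0.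
      rewrite /F !frD4 // !x6; apply: (eq2 H2 (q := e ^+ 4 + e ^+ 4 ^+ 4 ^+ 4 + e ^+ 4 ^+ 4 ^+ 4 ^+ 4 ^+ 4)).
      ring.
    by rewrite !F4 addrr_pchar2 // add0r.
  apply: fr_inj; move: F0; rewrite /F => /eqP; rewrite addr_eq0 oppr_pchar2 // => /eqP.
  by move=> h; rewrite -h.
have : hK c = hK d + (e ^+ 4) ^+ 2.
  by rewrite ce /hK /= !frD4 // !ee Hf_id3.
rewrite E => /eqP; rewrite -{1}[hK d]addr0 (inj_eq (addrI (hK d))) eq_sym.
rewrite !expf_eq0 /= => /eqP e0.
by rewrite ce e0 addr0.
Qed.


Lemma nestE (c : K) i : c ^+ (4 ^ i.+1) = (c ^+ (4 ^ i)) ^+ 4.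
Proof. by rewrite expnSr exprM. Qed.

Lemma eval_g0 (c : K) : (liftp K g0).[c] = hK c.
Proof.
rewrite (liftp_g0 H2) hornerD hornerM horner_exp !horner_sum.
rewrite !big_ord_recr !big_ord0 /= !hornerXn !nestE expn0 expr1 !add0r x6.
rewrite /hK /=.
apply: (eq2 H2 (q := (c + c ^+ 4) * (c + c ^+ 4 + c ^+ 4 ^+ 4 + c ^+ 4 ^+ 4 ^+ 4))).
rewrite /Hf; ring.
Qed.

Lemma perm_g0 : is_perm_poly K g0.
Proof.
rewrite /is_perm_poly; apply: injF_bij => c d; rewrite !eval_g0; exact: hK_inj.
Qed.
End PermK.

Lemma comp_Xn (R : comNzRingType) (p : {poly R}) n : 'X^n \Po p = p ^+ n.
Proof.
elim: n => [|n IH]; first by rewrite expr0 comp_polyC.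
by rewrite !exprS comp_polyM comp_polyX IH.
Qed.

Section FSide.
Variable F : finFieldType.
Hypothesis HF : #|F| = 4%N.
Lemma H2F : 2 \in [pchar F].
Proof. by apply: (@card_finPcharP _ 2 2); rewrite ?HF. Qed.
Lemma H2P : 2 \in [pchar {poly F}].
Proof. by rewrite pchar_poly H2F. Qed.
Let H2 := H2F.
Let H2p := H2P.

Lemma compS m :
  (\sum_(i < m) 'X^(4 ^ i)) \Po ('X^4 - 'X) = 'X^(4 ^ m) - 'X :> {poly F}.
Proof.
elim: m => [|m IH]; first by rewrite big_ord0 comp_poly0 expn0 expr1 subrr.
rewrite big_ord_recr /= comp_polyD IH comp_Xn !oppr_pchar2 // frD4n //.
rewrite -exprM -expnS.
by apply: (eq2 H2p (q := 'X^(4 ^ m))); ring.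
Qed.

Lemma a4 (a : F) : a ^+ 4 = a.
Proof. by rewrite -[in X in _ ^+ X]HF expf_card. Qed.
Lemma apow (a : F) k : a ^+ (4 ^ k) = a.
Proof.
elim: k => [|k IH]; first by rewrite expn0 expr1.
by rewrite expnSr exprM IH a4.
Qed.

Lemma exists_c : exists c : F, (c != 0) && (c != 1).
Proof.
case: (boolP [exists c : F, (c != 0) && (c != 1)]) => [/existsP //|]; rewrite negb_exists => /forallP H.
have : (#|[set: F]| <= #|[set (0 : F)%R; 1%R]|)%N.
  apply: subset_leq_card; apply/subsetP => a _.
  by move: (H a); rewrite in_set2 negb_and !negbK.
by rewrite cardsT HF cards2 eq_sym oner_neq0.
Qed.

Lemma psum0 k (c : F) : c != 0 -> c ^+ k != 1 -> \sum_(a : F) a ^+ k = 0.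
Proof.
move=> c0 ck.
have E : \sum_(a : F) a ^+ k = c ^+ k * \sum_(a : F) a ^+ k.
  rewrite {1}(reindex_inj (mulfI c0)) mulr_sumr; apply: eq_bigr => a _.
  by rewrite exprMn.
have : (1 - c ^+ k) * (\sum_(a : F) a ^+ k) = 0 by rewrite mulrBl mul1r -E subrr.
move/eqP; rewrite mulf_eq0 subr_eq0 eq_sym (negbTE ck) /=; by move/eqP.
Qed.

Lemma psum3 : \sum_(a : F) a ^+ 3 = 1.
Proof.
rewrite (bigD1 0) //= expr0n /= add0r.
rewrite (eq_bigr (fun _ => 1)); last first.
  move=> a a0; apply: (mulfI a0); rewrite mulr1 -exprS a4 //.
rewrite sumr_const cardC1 HF /=.
by rewrite -[3%N]/(1 + 2)%N natrD (two0 H2) addr0.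
Qed.

Lemma Apow (a : F) k : (a%:P) ^+ (4 ^ k) = a%:P :> {poly F}.
Proof. by rewrite -polyC_exp apow. Qed.

Lemma psumP k (c : F) : c != 0 -> c ^+ k != 1 ->
  \sum_(a : F) (a%:P) ^+ k = 0 :> {poly F}.
Proof.
move=> c0 ck; rewrite (eq_bigr (fun a : F => (a ^+ k)%:P)); last by move=> a _; rewrite polyC_exp.
by rewrite -rmorph_sum (psum0 c0 ck).
Qed.

Lemma sum6 (c0 c1 c2 c3 c4 c5 : {poly F}) :
  \sum_(a : F) (c0 + c1 * a%:P + c2 * (a%:P) ^+ 2 + c3 * (a%:P) ^+ 3
                + c4 * (a%:P) ^+ 4 + c5 * (a%:P) ^+ 5) = c3.
Proof.
have [c /andP [c0' c1']] := exists_c.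
have c2' : c ^+ 2 != 1.
  apply/negP => /eqP h; move/negP: c1'; apply; apply/eqP.
  have : (c + 1) ^+ 2 == 0 by rewrite sqrD2 // h expr1n addrr_pchar2.
  by rewrite expf_eq0 /= addr_eq0 oppr_pchar2 // => /eqP.
have c4' : c ^+ 4 != 1 by rewrite a4.
have c5' : c ^+ 5 != 1 by rewrite exprS a4 -expr2.
rewrite !big_split /= -!mulr_sumr sumr_const HF.
rewrite (psumP c0' c4') (psumP c0' c5') (psumP c0' c2').
rewrite (psumP (k := 1) c0' _); last by rewrite expr1.
rewrite (eq_bigr (fun a : F => (a ^+ 3)%:P)); last by move=> a _; rewrite polyC_exp.
rewrite -rmorph_sum psum3 //= !mulr0 mulr1 !addr0.
by rewrite (_ : 4 = 2 * 2)%N // mulrnA (mulrn_pchar H2p) ?mul0rn add0r.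
Qed.

Lemma sumF :
  \sum_(a : F) ('X + a%:P) ^+ (1 + 2 * 4 ^ 3 + 4 ^ 4 + 4 ^ 8)
  = ('X^(4 ^ 3)) ^+ 2 + 'X * 'X^(4 ^ 4) + 'X * 'X^(4 ^ 8) + 'X^(4 ^ 4) * 'X^(4 ^ 8) :> {poly F}.
Proof.
set T : {poly F} := 'X^(4 ^ 3); set V : {poly F} := 'X^(4 ^ 4); set U : {poly F} := 'X^(4 ^ 8).
have term : forall a : F, ('X + a%:P) ^+ (1 + 2 * 4 ^ 3 + 4 ^ 4 + 4 ^ 8) =
   ('X * V * U * T ^+ 2) + (('X * V + 'X * U + V * U) * T ^+ 2) * a%:P
   + (('X + V + U) * T ^+ 2 + 'X * V * U) * (a%:P) ^+ 2
   + (T ^+ 2 + 'X * V + 'X * U + V * U) * (a%:P) ^+ 3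
   + ('X + V + U) * (a%:P) ^+ 4 + 1 * (a%:P) ^+ 5.
  move=> a; rewrite !exprD expr1 mulnC exprM !frD4n // !Apow sqrD2 //.
  rewrite -/T -/V -/U; ring.
by rewrite (eq_bigr _ (fun a _ => term a)) sum6.
Qed.

Lemma comp_sq (p q : {poly F}) : (p ^+ 2) \Po q = (p \Po q) ^+ 2.
Proof. by rewrite !expr2 comp_polyM. Qed.

Lemma isg0 : is_g F (1 + 2 * 4 ^ 3 + 4 ^ 4 + 4 ^ 8) g0.
Proof.
rewrite /is_g sumF HF (liftp_g0 H2) comp_polyD comp_polyM comp_sq !compS.
rewrite !oppr_pchar2 //.
apply: (eq2 H2p (q := - ('X ^+ 2 + 'X^(4 ^ 3) * 'X))); ring.
Qed.

Lemma F2toR_inj : injective (@F2toR F).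
Proof.
move=> [[|[|x]] Hx] [[|[|y]] Hy] //; rewrite /F2toR /=.
- by move=> _; apply: val_inj.
- by move/eqP; rewrite eq_sym oner_eq0.
- by move/eqP; rewrite oner_eq0.
- by move=> _; apply: val_inj.
Qed.

Lemma g_unique g : is_g F (1 + 2 * 4 ^ 3 + 4 ^ 4 + 4 ^ 8) g -> g = g0.
Proof.
move=> Hg; have := isg0; rewrite /is_g Hg => /eqP.
rewrite -subr_eq0 -comp_polyB comp_poly_eq0; last first.
  by rewrite HF size_polyDl ?size_polyN ?size_polyXn ?size_polyX.
rewrite subr_eq0 => /eqP; apply: (map_inj_poly F2toR_inj).
by rewrite /F2toR.
Qed.
End FSide.

Lemma H2F2 : 2 \in [pchar {poly 'F_2}].
Proof. by rewrite pchar_poly pchar_Fp. Qed.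

Lemma congr_g0 : g0 %% ('X^(4 ^ 6) - 'X)
  = (Ssum 4 3 ^+ 2 + Ssum 4 4 ^+ (4 ^ 2 + 1)) %% ('X^(4 ^ 6) - 'X).
Proof.
set M : {poly 'F_2} := 'X^(4 ^ 6) - 'X.
have S8 : Ssum 4 8 = Ssum 4 4 ^+ (4 ^ 2) + M + M ^+ 4.
  rewrite /M /Ssum !big_ord_recr !big_ord0 /= !oppr_pchar2 ?H2F2 //.
  rewrite !frD4n ?H2F2 // frD4 ?H2F2 // -!exprM.
  ring.
rewrite /g0 S8.
have -> : (Ssum 4 4 ^+ (4 ^ 2) + M + M ^+ 4) * Ssum 4 4 + Ssum 4 3 ^+ 2
  = (Ssum 4 3 ^+ 2 + Ssum 4 4 ^+ (4 ^ 2 + 1)) + (Ssum 4 4 + M ^+ 3 * Ssum 4 4) * M.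
  by rewrite exprD expr1; ring.
by rewrite modpD modp_mull addr0.
Qed.


Theorem mainTheorem5 :
  forall F : finFieldType, #|F| = 4%N ->
    (exists g : {poly 'F_2}, is_g F (1 + 2 * 4 ^ 3 + 4 ^ 4 + 4 ^ 8) g) /\
    (forall g : {poly 'F_2}, is_g F (1 + 2 * 4 ^ 3 + 4 ^ 4 + 4 ^ 8) g ->
       g %% ('X^(4 ^ 6) - 'X)
         = (Ssum 4 3 ^+ 2 + Ssum 4 4 ^+ (4 ^ 2 + 1)) %% ('X^(4 ^ 6) - 'X)
       /\ (forall K : finFieldType, #|K| = (4 ^ 6)%N -> is_perm_poly K g)).
Proof.
move=> F HF; split; first by exists g0; exact: isg0.
move=> g Hg; rewrite (g_unique HF Hg); split; first exact: congr_g0.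
by move=> K HK; exact: perm_g0.
Qed.
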